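(* Let $X$ be a countable set and let $w$ be an essentially locally finite weight on $X$ such that $(X,\delta_w)$ is complete. Then for all $x,y\in X$ there exists a $w$-geodesic from $x$ to $y$.
   Context: A weight on $X$ is a symmetric function $w:X\times X\to[0,\infty]$ with $w(x,y)=0$ iff $x=y$; it is essentially locally finite if $\#\{y\in X\mid w(x,y)<R\}<\infty$ for all $x\in X$, $R>0$. A path from $x$ to $y$ is a finite sequence $(x_0,\dots,x_n)$ of pairwise distinct elements of $X$ with $x_0=x$, $x_n=y$; its $w$-length is $l_w=\sum_{i=1}^n w(x_{i-1},x_i)$, and $\delta_w(x,y)$ is the infimum of $l_w$ over all paths from $x$ to $y$ (a pseudo metric, possibly taking the value $\infty$). A $w$-geodesic from $x$ to $y$ is a path $\gamma$ from $x$ to $y$ with $l_w(\gamma)=\delta_w(x,y)$. *)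

(* Defs.v *)
(* Weights take values in \bar R for an
   arbitrary realType R (the extended reals [0, +oo] are the nonnegative part). *)
From HB Require Import structures.
From mathcomp Require Import all_boot all_order all_algebra.
From mathcomp Require Import all_classical all_reals all_analysis.
Set Implicit Arguments. Unset Strict Implicit. Unset Printing Implicit Defensive.
Import Order.TTheory GRing.Theory Num.Theory.
Local Open Scope classical_set_scope.
Local Open Scope ring_scope.
Local Open Scope ereal_scope.

Section Weights.
Context {R : realType} {X : countType}.
Implicit Types (w : X -> X -> \bar R) (x y : X) (p : seq X).

Definition is_weight w : Prop :=
  [/\ forall x y, w x y = w y x,
      forall x y, 0 <= w x y
    & forall x y, w x y = 0 <-> x = y].

Definition ess_locally_finite w : Prop :=
  forall x (r : R), (0 < r)%R -> finite_set [set y | w x y < r%:E].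

Definition is_path x y p : Prop :=
  [/\ p != [::], head x p = x, last x p = y & uniq p].

Fixpoint lw_from w (a : X) (s : seq X) : \bar R :=
  match s with
  | [::] => 0
  | b :: s' => w a b + lw_from w b s'
  end.

Definition lw w p : \bar R :=
  match p with
  | [::] => 0
  | a :: s => lw_from w a s
  end.

Definition delta w x y : \bar R :=
  ereal_inf [set lw w p | p in [set p | is_path x y p]].

Definition delta_cauchy w (u : nat -> X) : Prop :=
  forall e : R, (0 < e)%R -> exists N : nat,
    forall n m : nat, (N <= n)%N -> (N <= m)%N -> delta w (u n) (u m) < e%:E.

Definition delta_converges w (u : nat -> X) (x : X) : Prop :=
  forall e : R, (0 < e)%R -> exists N : nat,
    forall n : nat, (N <= n)%N -> delta w (u n) x < e%:E.

Definition delta_complete w : Prop :=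
  forall u : nat -> X, delta_cauchy w u -> exists x, delta_converges w u x.

Definition is_geodesic w x y p : Prop :=
  is_path x y p /\ lw w p = delta w x y.

End Weights.

(* Main.v *)
Require Import Defs.
From HB Require Import structures.
From mathcomp Require Import all_boot all_order all_algebra.
From mathcomp Require Import all_classical all_reals all_analysis.
Set Implicit Arguments. Unset Strict Implicit. Unset Printing Implicit Defensive.
Import Order.TTheory GRing.Theory Num.Theory.
Local Open Scope classical_set_scope.
Local Open Scope ring_scope.
Local Open Scope ereal_scope.

Section Aux.
Context {R : realType} {X : countType} (w : X -> X -> \bar R).
Hypothesis wsym : forall x y, w x y = w y x.
Hypothesis wge0 : forall x y, 0 <= w x y.

Lemma lw_cons_ne d t : t != [::] -> lw w (d :: t) = w d (head d t) + lw w t.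
Proof. by case: t. Qed.

Lemma lw_ge0 p : 0 <= lw w p.
Proof.
case: p => // a s; elim: s a => //= b s IH a.
by rewrite adde_ge0.
Qed.

Lemma lw_cons_ge b p : lw w p <= lw w (b :: p).
Proof.
case: p => [|c p]; first by [].
rewrite [lw w (b :: _)]lw_cons_ne //; apply: leeDr; exact: wge0.
Qed.

Lemma lw_suffix s t : lw w t <= lw w (s ++ t).
Proof.
elim: s => [|b s IH] //=; exact: le_trans IH (lw_cons_ge _ _).
Qed.

Lemma lw_rcons2 s c b : lw w (rcons (rcons s c) b) = lw w (rcons s c) + w c b.
Proof.
elim: s => [|d s IH]; first by rewrite /= add0e adde0.
rewrite !rcons_cons.
rewrite [lw w (d :: _)]lw_cons_ne; last by case: s {IH}.
rewrite [lw w (d :: rcons s c)]lw_cons_ne; last by case: s {IH}.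
rewrite IH addeA; congr (w d _ + _ + _); by case: s {IH}.
Qed.

Lemma lw_rev p : lw w (rev p) = lw w p.
Proof.
case: p => // c p; elim: p c => [|c p IH] b //.
rewrite rev_cons rev_cons lw_rcons2 -rev_cons IH.
by rewrite [lw w (b :: c :: p)]/= addeC wsym.
Qed.

Lemma lw_cat s c t : lw w (s ++ c :: t) = lw w (rcons s c) + lw w (c :: t).
Proof.
elim: s => [|d s IH]; first by rewrite /= add0e.
rewrite cat_cons rcons_cons.
rewrite [lw w (d :: _)]lw_cons_ne; last by case: s {IH}.
rewrite [lw w (d :: rcons s c)]lw_cons_ne; last by case: s {IH}.
rewrite IH addeA; congr (w d _ + _ + _); by case: s {IH}.
Qed.

Lemma is_path_rev (a b : X) p : is_path a b p -> is_path b a (rev p).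
Proof.
case=> p0 hp lp up; split.
- by case: p p0 {hp lp up} => // c p _; rewrite rev_cons; case: (rev p).
- case/lastP: p p0 hp lp up => // s c _ _; rewrite last_rcons rev_rcons /=. done.
- case: p p0 hp lp up => // c s _ /= -> _ _.
  rewrite rev_cons last_rcons //.
- by rewrite rev_uniq.
Qed.

Lemma delta_le a b p : is_path a b p -> delta w a b <= lw w p.
Proof. by move=> hp; apply: ereal_inf_lbound; exists p. Qed.

Lemma delta_le_rev a b p : is_path a b p -> delta w b a <= lw w p.
Proof. by move=> /is_path_rev hp; rewrite -lw_rev; apply: delta_le. Qed.

Lemma delta_ge0 a b : 0 <= delta w a b.
Proof. apply: le_ereal_inf_tmp => _ [p _ <-]; exact: lw_ge0. Qed.

End Aux.


Lemma argmin_seq {R : realType} {T : eqType} (f : T -> \bar R) (s : seq T) a0 :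
  a0 \in s -> exists2 a, a \in s & forall b, b \in s -> f a <= f b.
Proof.
elim: s a0 => // c s IH a0 _.
case: s IH => [|d s] IH.
  by exists c => [|b]; rewrite ?mem_seq1 ?inE // => /eqP ->.
have [a ain amin] := IH d (mem_head _ _).
have [fc|fa] := leP (f c) (f a).
  exists c; first exact: mem_head.
  move=> b; rewrite in_cons => /orP[/eqP->//|/amin]; exact: le_trans.
exists a; first by rewrite in_cons ain orbT.
move=> b; rewrite in_cons => /orP[/eqP->|/amin//]; exact: ltW.
Qed.

Lemma argmin_fin {R : realType} {T : choiceType} (A : set T) (f : T -> \bar R) :
  finite_set A -> A !=set0 -> exists2 a, A a & forall b, A b -> f a <= f b.
Proof.
move=> /finite_fsetP [F ->] [a0 Fa0].
have [a ain amin] := argmin_seq f Fa0.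
by exists a.
Qed.

Section Aux2.
Context {R : realType} {X : countType} (w : X -> X -> \bar R).
Hypothesis wW : is_weight w.
Hypothesis wF : ess_locally_finite w.

Lemma last_step (a z : X) p : a != z -> is_path a z p ->
  exists2 b, b != z & w z b <= lw w p.
Proof.
have [wsym wge0 w0] := wW.
move=> az hp; have := is_path_rev hp; case=> + + + +.
rewrite -(lw_rev wsym p).
case: (rev p) => [//|c t] _ /= -> {c}.
case: t => [|b t] /=; first by move=> za; rewrite za eqxx in az.
move=> _ /andP[]; rewrite in_cons negb_or => /andP[zb _] _.
exists b; first by rewrite eq_sym.
apply: leeDl; exact: (lw_ge0 wge0 (b :: t)).
Qed.

Lemma eps_sep (z : X) : exists2 e : R, (0 < e)%R &
  forall a p, a != z -> is_path a z p -> e%:E <= lw w p.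
Proof.
have [wsym wge0 w0] := wW.
pose F := [set b | w z b < 1%:E /\ b != z].
have Ffin : finite_set F.
  apply: sub_finite_set (wF z ltr01) => b [] //.
have [Fn0|F0] := pselect (F !=set0); last first.
  exists 1%R => // a p az hp.
  have [b bz hb] := last_step az hp.
  apply: le_trans hb; rewrite leNgt; apply/negP => hb.
  by apply: F0; exists b.
have [b0 [Fb0 b0z] bmin] := argmin_fin (w z) Ffin Fn0.
have := wge0 z b0; have := Fb0.
case E: (w z b0) => [r| |] //.
rewrite lte_fin lee_fin => r1 r0.
have rpos : (0 < r)%R.
  rewrite lt_neqAle r0 andbT; apply/negP => /eqP r0'.
  move: E; rewrite -r0' => /w0 eb0. by rewrite eb0 eqxx in b0z.
exists (Num.min 1 r)%R; first by rewrite lt_min ltr01 rpos.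
move=> a p az hp; have [b bz hb] := last_step az hp.
apply: le_trans hb.
have [wb1|wb1] := ltP (w z b) 1%:E.
  apply: le_trans (bmin b (conj wb1 bz)); rewrite E lee_fin ge_min lexx orbT //.
apply: le_trans wb1; rewrite lee_fin ge_min lexx //.
Qed.

End Aux2.


Lemma fin_bound {R : realType} (x : \bar R) (L : R) :
  0 <= x -> x <= L%:E -> x = (fine x)%:E.
Proof. by case: x. Qed.

Section Konig.
Context {R : realType} {X : countType} (w : X -> X -> \bar R).
Hypothesis wW : is_weight w.
Hypothesis wF : ess_locally_finite w.
Hypothesis wC : delta_complete w.
Variables (y : X) (L : R).
Hypothesis L0 : (0 <= L)%R.

Definition ext (q : seq X) := [set p : seq X | uniq p /\ lw w p <= L%:E /\ exists s, p = s ++ q].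
Definition good q := ~ finite_set (ext q).

Lemma good_facts q : good q -> uniq q /\ lw w q <= L%:E.
Proof.
have [wsym wge0 w0] := wW.
move=> gq.
have [p [up [lp [s ps]]]] : ext q !=set0.
  apply/set0P/negP => /eqP e; apply: gq; rewrite e; exact: finite_set0.
split.
  by move: up; rewrite ps cat_uniq => /and3P[].
apply: le_trans lp; rewrite ps; exact: lw_suffix.
Qed.

Lemma good_step q : q != [::] -> good q -> exists a, good (a :: q).
Proof.
have [wsym wge0 w0] := wW.
case: q => [//|h q'] _ gq.
apply: contrapT => hn.
have fa : forall a, finite_set (ext (a :: h :: q')).
  move=> a; apply: contrapT => ga; apply: hn; by exists a.
apply: gq.
pose N := [set a | w h a < (L + 1)%:E].
have Nfin : finite_set N by apply: wF; rewrite ltr_wpDl.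
apply: (@sub_finite_set _ _ ([set h :: q'] `|` \bigcup_(a in N) ext (a :: h :: q'))).
  move=> p [up [lp [s ps]]].
  case/lastP: s ps => [|s' a] ps; first by left.
  right; exists a.
    rewrite /N /= wsym.
    apply: le_lt_trans (_ : L%:E < (L+1)%:E); last by rewrite lte_fin ltrDl.
    apply: le_trans lp; rewrite ps cat_rcons.
    apply: le_trans (lw_suffix wge0 s' _).
    rewrite [lw w (a :: _)]/=; apply: leeDl; exact: (lw_ge0 wge0 (h :: q')).
  by split => //; split => //; exists s'; rewrite ps cat_rcons.
rewrite finite_setU; split; first exact: finite_set1.
exact: bigcup_finite.
Qed.

Lemma ext_fin : finite_set (ext [:: y]).
Proof.
have [wsym wge0 w0] := wW.
apply: contrapT => gy.
have : forall q, exists a, good q -> q != [::] -> good (a :: q).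
  move=> q; have [h|h] := pselect (good q /\ q != [::]).
    by have [a ga] := good_step h.2 h.1; exists a.
  by exists y => g1 g2; case: h.
case/choice => g hg.
pose qs n := iter n (fun q => g q :: q) [:: y].
have qsS n : qs n.+1 = g (qs n) :: qs n by [].
have qs_ne n : qs n != [::] by case: n.
have qs_good n : good (qs n).
  elim: n => [//|n IH]; rewrite qsS; exact: hg.
have qs_suf n m : (n <= m)%N -> exists s, qs m = s ++ qs n.
  elim: m => [|m IH]; first by rewrite leqn0 => /eqP ->; exists [::].
  rewrite leq_eqVlt => /orP[/eqP ->|]; first by exists [::].
  rewrite ltnS => /IH [s hs]; exists (g (qs m) :: s); by rewrite qsS hs.
pose u n := head y (qs n).
pose l n := fine (lw w (qs n)).
have lE n : lw w (qs n) = (l n)%:E.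
  exact: (fin_bound (lw_ge0 wge0 _) (good_facts (qs_good n)).2).
have lL n : (l n <= L)%R.
  by rewrite -lee_fin -lE; exact: (good_facts (qs_good n)).2.
have lmono n m : (n <= m)%N -> (l n <= l m)%R.
  move=> /qs_suf [s hs]; rewrite -lee_fin -!lE hs; exact: lw_suffix.
have dist n m : (n <= m)%N ->
    delta w (u n) (u m) <= (l m - l n)%:E /\ delta w (u m) (u n) <= (l m - l n)%:E.
  move=> nm; have [s hs] := qs_suf n m nm.
  have hm := lE m; have hn := lE n; have um := erefl (u m); have un := erefl (u n).
  rewrite {2}/u in un; rewrite {2}/u hs in um.
  have [up _] := good_facts (qs_good m).
  rewrite hs in hm up.
  case E: (qs n) hm hn un um up => [|c q'] hm hn un um up.
    by move: (qs_ne n); rewrite E.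
  rewrite /= in un.
  have hp : is_path (u m) (u n) (rcons s c).
    split.
    - by case: s {hs hm um up}.
    - by rewrite um; case: s {hs hm um up}.
    - by rewrite last_rcons.
    - by move: up; rewrite -cat_rcons cat_uniq => /and3P[].
  rewrite lw_cat in hm.
  have P0 := lw_ge0 wge0 (rcons s c).
  have PL : lw w (rcons s c) <= (l m)%:E.
    by rewrite -hm; apply: leeDl; exact: lw_ge0.
  have PE := fin_bound P0 PL.
  rewrite PE hn -EFinD in hm; case: hm => hm.
  have -> : (l m - l n)%R = fine (lw w (rcons s c)) by rewrite -hm addrK.
  rewrite -PE; split; [exact: delta_le_rev hp | exact: delta_le hp].
have cau : delta_cauchy w u.
  move=> e e0.
  have hs : has_sup (range l).
    split; first by exists (l 0%N), 0%N.
    by exists L => _ [n _ <-].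
  have [_ [N _ <-] hN] := sup_adherent e0 hs.
  exists N => n m Nn Nm.
  have key : forall n m, (N <= n)%N -> (n <= m)%N -> (l m - l n < e)%R.
    move=> n' m' Nn' nm'.
    have := sup_upper_bound hs (ex_intro2 _ _ m' I erefl) => hub.
    have := lmono _ _ Nn'.
    move: hN; rewrite ltrBlDr => hN hNn.
    rewrite ltrBlDr; apply: le_lt_trans hub _.
    apply: lt_le_trans hN _; by rewrite [(e + _)%R]addrC lerD2r.
  have [nm|mn] := leqP n m.
    apply: le_lt_trans (dist n m nm).1 _; rewrite lte_fin; apply: key => //; exact: ltnW.
  apply: le_lt_trans (dist m n (ltnW mn)).2 _; rewrite lte_fin; apply: key => //; exact: ltnW.
have [z hz] := wC cau.
have [e e0 he] := eps_sep wW wF z.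
have [N hN] := hz e e0.
have uz n : (N <= n)%N -> u n = z.
  move=> Nn; apply/eqP; apply: contrapT => /negP unz.
  have [_ [p hp <-] hlt] := ereal_inf_lt (hN n Nn).
  by have := he _ _ unz hp; rewrite leNgt hlt.
have := (good_facts (qs_good N.+1)).1.
rewrite qsS /= => /andP[+ _].
have -> : g (qs N) = u N.+1 by [].
rewrite (uz N.+1 (leqnSn N)) -(uz N (leqnn N)) /u.
by case: (qs N) (qs_ne N) => //= c s _; rewrite in_cons eqxx.
Qed.

End Konig.


Theorem lemma2p4 (R : realType) (X : countType) (w : X -> X -> \bar R) :
  is_weight w -> ess_locally_finite w -> delta_complete w ->
  forall x y : X, exists p : seq X, is_geodesic w x y p.
Proof.
move=> wW wF wC x y; have [wsym wge0 w0] := wW.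
have [<-|xy] := eqVneq x y.
  have hp : is_path x x [:: x] by split.
  exists [:: x]; split => //; apply: le_anti.
  apply/andP; split; [exact: delta_ge0 | exact: delta_le hp].
have d0 := delta_ge0 wge0 x y.
case E: (delta w x y) d0 => [r| |] // r0.
  2: { have hp : is_path x y [:: x; y] by split => //=; rewrite inE xy.
       exists [:: x; y]; split => //; apply: le_anti; apply/andP; split; first by rewrite E leey.
       exact: delta_le hp. }
rewrite lee_fin in r0.
have L0 : (0 <= r + 1)%R by rewrite addr_ge0.
have fin := ext_fin wW wF wC y L0.
pose A := [set p | is_path x y p /\ lw w p <= (r + 1)%:E].
have Afin : finite_set A.
  apply: sub_finite_set fin => p [[pn hh hl up] lp].
  split => //; split => //.
  case/lastP: p pn hh hl up lp => [//|s c] _ _; rewrite last_rcons => -> _ _.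
  by exists s; rewrite cats1.
have An0 : A !=set0.
  have : delta w x y < (r + 1)%:E by rewrite E lte_fin ltrDl.
  case/ereal_inf_lt => _ [p hp <-] lp; exists p; split => //; exact: ltW.
have [p0 [hp0 lp0] pmin] := argmin_fin (lw w) Afin An0.
exists p0; split => //; apply: le_anti; rewrite (delta_le w hp0) andbT.
apply: le_ereal_inf_tmp => _ [p hp <-].
have [lp|lp] := leP (lw w p) (r + 1)%:E; first exact: pmin.
exact: le_trans lp0 (ltW lp).
Qed.
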